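(* Let $n\ge2$ and let $F:(0,\pi)\to(0,\infty)$ be strictly decreasing. Let $x_1,\dots,x_n$ be distinct points on the unit circle $S^1$, listed in counterclockwise cyclic order, and suppose every particle is in tangential equilibrium under the force law described in the context. Then the arc distance $d(x_i,x_{(i \bmod n)+1})$ between cyclically consecutive particles is the same for all $i=1,\dots,n$.
   Context: For $p,q\in S^1$ let $d(p,q)\in[0,\pi]$ be the geodesic (arc-length) distance. A particle at $q$ exerts on a particle at $p\ne q$ a force tangent to $S^1$ at $p$ of magnitude $F(d(p,q))$, directed away from $q$ along the shorter arc from $q$ to $p$, if $d(p,q)<\pi$; an antipodal particle ($d(p,q)=\pi$) exerts no tangential force. The particle at $x_i$ is in equilibrium if the sum of the (signed, tangential) forces exerted on it by all the other particles $x_j$, $j\ne i$, is zero, i.e. the total force from particles in the open counterclockwise half-circle from $x_i$ equals the total force from particles in the open clockwise half-circle from $x_i$. *)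

(* Defs.v *)
From Stdlib Require Import Reals Lra Lia List.
Import ListNotations.
Open Scope R_scope.

(* A point of S^1 is represented by an angle a : R, i.e. the point (cos a, sin a). *)

Definition arcdist (a b : R) : R := acos (cos (b - a)).

(* Signed tangential force (counterclockwise positive) exerted on the particle at
   angle a by the particle at angle b.  The point b lies in the open
   counterclockwise half-circle from a iff sin (b - a) > 0, in the open clockwise
   half-circle iff sin (b - a) < 0; sin (b - a) = 0 means b is antipodal (or equal)
   and then there is no tangential force.  The force has magnitude F (d(a,b)) and
   points away from b along the shorter arc. *)
Definition tforce (F : R -> R) (a b : R) : R :=
  if Rlt_dec 0 (sin (b - a)) then - F (arcdist a b)
  else if Rlt_dec (sin (b - a)) 0 then F (arcdist a b)
  else 0.

Definition sumR (n : nat) (f : nat -> R) : R :=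
  fold_right Rplus 0 (map f (seq 0 n)).

Definition in_equilibrium (F : R -> R) (n : nat) (th : nat -> R) (i : nat) : Prop :=
  sumR n (fun j => if Nat.eq_dec j i then 0 else tforce F (th i) (th j)) = 0.

(* Main.v *)
Require Import Defs.
From Stdlib Require Import Reals Lra Lia List.
Open Scope R_scope.

Lemma fold_Rplus_acc (l : list R) (a : R) :
  fold_right Rplus a l = fold_right Rplus 0 l + a.
Proof. induction l; simpl; [lra | rewrite IHl; lra]. Qed.

Lemma sumR_S n f : sumR (S n) f = sumR n f + f n.
Proof.
  unfold sumR. rewrite seq_S, map_app, fold_right_app. simpl.
  rewrite fold_Rplus_acc. lra.
Qed.

Lemma sumR_ext n f g : (forall j, (j < n)%nat -> f j = g j) -> sumR n f = sumR n g.
Proof.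
  induction n; intros H; [reflexivity|].
  rewrite !sumR_S, IHn by (intros; apply H; lia). rewrite H by lia. reflexivity.
Qed.

Lemma sumR_S' n f : sumR (S n) f = f 0%nat + sumR n (fun j => f (S j)).
Proof.
  induction n.
  - unfold sumR; simpl; lra.
  - rewrite sumR_S, IHn, sumR_S. lra.
Qed.

Lemma sumR_le n a b : (forall j, (j < n)%nat -> a j <= b j) -> sumR n a <= sumR n b.
Proof.
  induction n; intros H; [unfold sumR; simpl; lra|].
  rewrite !sumR_S. pose proof (H n ltac:(lia)). pose proof (IHn ltac:(intros; apply H; lia)). lra.
Qed.

Lemma sumR_eq_le n a b : (forall j, (j < n)%nat -> a j <= b j) -> sumR n a = sumR n b ->
  forall j, (j < n)%nat -> a j = b j.
Proof.
  induction n; intros H E j Hj; [lia|].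
  rewrite !sumR_S in E.
  pose proof (H n ltac:(lia)). pose proof (sumR_le n a b ltac:(intros; apply H; lia)).
  assert (an : a n = b n) by lra.
  destruct (Nat.eq_dec j n) as [->|]; [exact an|].
  apply IHn; [intros; apply H; lia | lra | lia].
Qed.

Lemma rot1 n h : (1 <= n)%nat ->
  sumR n (fun j => h ((S j) mod n)%nat) = sumR n h.
Proof.
  intros Hn. destruct n as [|m]; [lia|].
  rewrite sumR_S, sumR_S'.
  rewrite Nat.Div0.mod_same.
  rewrite (sumR_ext m _ (fun j => h (S j))). lra.
  intros j Hj. rewrite Nat.mod_small by lia. reflexivity.
Qed.

Lemma rot n h i : (1 <= n)%nat ->
  sumR n (fun k => h ((i + k) mod n)%nat) = sumR n h.
Proof.
  intros Hn. induction i.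
  - apply sumR_ext. intros j Hj. simpl. rewrite Nat.mod_small by lia. reflexivity.
  - rewrite <- IHi. rewrite <- (rot1 n (fun k => h ((i + k) mod n)%nat) Hn).
    apply sumR_ext. intros j Hj. cbv beta. f_equal.
    rewrite Nat.Div0.add_mod_idemp_r. f_equal. lia.
Qed.

Definition gf (F : R -> R) (t : R) : R :=
  if Rlt_dec 0 (sin t) then - F (acos (cos t))
  else if Rlt_dec (sin t) 0 then F (acos (cos t)) else 0.

Lemma tforce_gf F a b : tforce F a b = gf F (b - a).
Proof. reflexivity. Qed.

Lemma gf_period F t k : gf F (t + 2 * INR k * PI) = gf F t.
Proof. unfold gf. rewrite sin_period, cos_period. reflexivity. Qed.

Lemma gf_0 F : gf F 0 = 0.
Proof. unfold gf. rewrite sin_0. destruct (Rlt_dec 0 0); [lra|]. reflexivity. Qed.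

Lemma gf_lo F t : 0 < t < PI -> gf F t = - F t.
Proof.
  intros H. unfold gf. destruct (Rlt_dec 0 (sin t)) as [_|n]; [|exfalso; apply n, sin_gt_0; lra].
  rewrite acos_cos by lra. reflexivity.
Qed.

Lemma gf_mid F : gf F PI = 0.
Proof. unfold gf. rewrite sin_PI. destruct (Rlt_dec 0 0); [lra|]. reflexivity. Qed.

Lemma gf_hi F t : PI < t < 2 * PI -> gf F t = F (2 * PI - t).
Proof.
  intros H. unfold gf. pose proof (sin_lt_0 t ltac:(lra) ltac:(lra)).
  destruct (Rlt_dec 0 (sin t)); [lra|]. destruct (Rlt_dec (sin t) 0); [|lra].
  replace (cos t) with (cos (2 * PI - t)).
  - rewrite acos_cos by lra. reflexivity.
  - rewrite cos_minus, cos_2PI, sin_2PI. ring.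
Qed.

Lemma gf_strict F
  (Fpos : forall x, 0 < x < PI -> 0 < F x)
  (Fdec : forall x y, 0 < x < PI -> 0 < y < PI -> x < y -> F y < F x) s t :
  0 < s -> s < t -> t < 2 * PI -> gf F s < gf F t.
Proof.
  intros H1 H2 H3.
  destruct (Rlt_le_dec s PI) as [sl|sg].
  - rewrite gf_lo by lra.
    destruct (Rlt_le_dec t PI) as [tl|tg].
    + rewrite gf_lo by lra. pose proof (Fdec s t ltac:(lra) ltac:(lra) H2). lra.
    + pose proof (Fpos s ltac:(lra)). destruct (Req_dec t PI) as [->|].
      * rewrite gf_mid. lra.
      * rewrite gf_hi by lra. pose proof (Fpos (2*PI - t) ltac:(lra)). lra.
  - destruct (Req_dec s PI) as [->|].
    + rewrite gf_mid, gf_hi by lra. apply Fpos. lra.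
    + rewrite !gf_hi by lra. apply Fdec; lra.
Qed.

Definition phi (th : nat -> R) (n k : nat) : R := th (k mod n)%nat + 2 * INR (k / n)%nat * PI.

Section Main.
Variables (n : nat) (F : R -> R) (th : nat -> R)
  (Hn : (2 <= n)%nat)
  (Fpos : forall x, 0 < x < PI -> 0 < F x)
  (Fdec : forall x y, 0 < x < PI -> 0 < y < PI -> x < y -> F y < F x)
  (Hord : forall i, (S i < n)%nat -> th i < th (S i))
  (Hwrap : th (pred n) < th 0%nat + 2 * PI)
  (Heq : forall i, (i < n)%nat -> in_equilibrium F n th i).

Lemma phi_small k : (k < n)%nat -> phi th n k = th k.
Proof. intros H. unfold phi. rewrite Nat.mod_small, Nat.div_small by lia. simpl. lra. Qed.

Lemma phi_n k : phi th n (k + n) = phi th n k + 2 * PI.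
Proof.
  unfold phi. replace (k + n)%nat with (k + 1 * n)%nat by lia.
  rewrite Nat.Div0.mod_add.
  replace (k + 1 * n)%nat with (1 * n + k)%nat by lia.
  rewrite Nat.div_add_l by lia. rewrite plus_INR. simpl. lra.
Qed.

Lemma phi_step k : phi th n k < phi th n (S k).
Proof.
  induction k as [k IH] using (well_founded_induction Wf_nat.lt_wf).
  destruct (Nat.lt_ge_cases (S k) n).
  - rewrite !phi_small by lia. apply Hord. lia.
  - destruct (Nat.eq_dec (S k) n).
    + rewrite phi_small by lia. replace (S k) with (0 + n)%nat by lia.
      rewrite phi_n, phi_small by lia. replace k with (pred n) by lia. exact Hwrap.
    + replace k with ((k - n) + n)%nat by lia.
      replace (S (k - n + n)) with (S (k - n) + n)%nat by lia.
      rewrite !phi_n. pose proof (IH (k - n)%nat ltac:(lia)). lra.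
Qed.

Lemma phi_mono a b : (a < b)%nat -> phi th n a < phi th n b.
Proof.
  intros H. induction b; [lia|].
  destruct (Nat.eq_dec a b) as [->|]; [apply phi_step|].
  pose proof (phi_step b). pose proof (IHb ltac:(lia)). lra.
Qed.

Lemma phi_bound i k : (1 <= k < n)%nat ->
  0 < phi th n (i + k) - phi th n i < 2 * PI.
Proof.
  intros H. pose proof (phi_mono i (i + k) ltac:(lia)).
  pose proof (phi_mono (i + k) (i + n) ltac:(lia)). rewrite phi_n in *. lra.
Qed.

Lemma E_zero i : (i < n)%nat ->
  sumR n (fun k => gf F (phi th n (i + k) - phi th n i)) = 0.
Proof.
  intros Hi. pose proof (Heq i Hi) as E. unfold in_equilibrium in E.
  rewrite (sumR_ext n _ (fun j => tforce F (th i) (th j))) in E.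
  2:{ intros j Hj. destruct (Nat.eq_dec j i) as [->|]; [|reflexivity].
      rewrite tforce_gf. replace (th i - th i) with 0 by ring. rewrite gf_0. reflexivity. }
  rewrite <- (rot n (fun j => tforce F (th i) (th j)) i) in E by lia.
  rewrite <- E. apply sumR_ext. intros k Hk. rewrite tforce_gf.
  rewrite (phi_small i Hi). unfold phi.
  replace (th ((i + k) mod n)%nat + 2 * INR ((i + k) / n) * PI - th i)
    with ((th ((i + k) mod n)%nat - th i) + 2 * INR ((i + k) / n) * PI) by ring.
  apply gf_period.
Qed.

Lemma E_zero' i : (i <= n)%nat ->
  sumR n (fun k => gf F (phi th n (i + k) - phi th n i)) = 0.
Proof.
  intros Hi. destruct (Nat.eq_dec i n) as [->|]; [|apply E_zero; lia].
  rewrite <- (E_zero 0%nat) by lia. apply sumR_ext. intros k Hk.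
  replace (n + k)%nat with (k + n)%nat by lia.
  pose proof (phi_n 0%nat) as P0. simpl in P0. rewrite P0, phi_n. simpl. f_equal. ring.
Qed.

Definition G k := phi th n (S k) - phi th n k.

Lemma G_per k : G (k + n) = G k.
Proof. unfold G. replace (S (k + n)) with (S k + n)%nat by lia. rewrite !phi_n. ring. Qed.

Lemma exists_max : exists i0, (i0 < n)%nat /\ forall j, (j < n)%nat -> G j <= G i0.
Proof.
  assert (forall m, (1 <= m)%nat -> exists i0, (i0 < m)%nat /\ forall j, (j < m)%nat -> G j <= G i0).
  { induction m; intros Hm; [lia|].
    destruct (Nat.eq_dec m 0) as [->|].
    - exists 0%nat. split; [lia|]. intros j Hj. replace j with 0%nat by lia. lra.
    - destruct (IHm ltac:(lia)) as [i0 [Hi0 Hmax]].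
      destruct (Rle_dec (G m) (G i0)).
      + exists i0. split; [lia|]. intros j Hj. destruct (Nat.eq_dec j m) as [->|]; [lra|]. apply Hmax; lia.
      + exists m. split; [lia|]. intros j Hj. destruct (Nat.eq_dec j m) as [->|]; [lra|].
        pose proof (Hmax j ltac:(lia)). lra. }
  apply H. lia.
Qed.

Lemma all_eq : forall j, (j < n)%nat -> G j = G 0%nat.
Proof.
  destruct exists_max as [i0 [Hi0 Hmax]].
  assert (Hmax' : forall k, (k < n)%nat -> G (i0 + k) <= G i0).
  { intros k Hk. destruct (Nat.lt_ge_cases (i0 + k) n); [apply Hmax; lia|].
    replace (i0 + k)%nat with ((i0 + k - n) + n)%nat by lia. rewrite G_per. apply Hmax; lia. }
  set (a := fun k => gf F (phi th n (S i0 + k) - phi th n (S i0))).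
  set (b := fun k => gf F (phi th n (i0 + k) - phi th n i0)).
  assert (Dk : forall k, phi th n (S i0 + k) - phi th n (S i0)
     = (phi th n (i0 + k) - phi th n i0) + (G (i0 + k) - G i0)).
  { intros k. unfold G. replace (S i0 + k)%nat with (S (i0 + k)) by lia. ring. }
  assert (Hle : forall k, (k < n)%nat -> a k <= b k).
  { intros k Hk. unfold a, b. destruct (Nat.eq_dec k 0) as [->|].
    - rewrite !Nat.add_0_r. unfold Rminus. rewrite !Rplus_opp_r. lra.
    - pose proof (phi_bound (S i0) k ltac:(lia)). pose proof (phi_bound i0 k ltac:(lia)).
      pose proof (Hmax' k Hk). rewrite Dk in *.
      destruct (Req_dec (G (i0 + k)) (G i0)) as [e|ne].
      + rewrite e. replace (G i0 - G i0) with 0 by ring. rewrite Rplus_0_r. lra.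
      + left. apply gf_strict; auto; lra. }
  assert (Hab : sumR n a = sumR n b).
  { unfold a, b. rewrite E_zero' by lia. rewrite E_zero by lia. reflexivity. }
  pose proof (sumR_eq_le n a b Hle Hab) as Eq.
  assert (Hk : forall k, (k < n)%nat -> G (i0 + k) = G i0).
  { intros k Hk. destruct (Nat.eq_dec k 0) as [->|]; [rewrite Nat.add_0_r; reflexivity|].
    pose proof (Eq k Hk) as E. unfold a, b in E.
    pose proof (phi_bound (S i0) k ltac:(lia)). pose proof (phi_bound i0 k ltac:(lia)).
    pose proof (Hmax' k Hk). rewrite Dk in *.
    destruct (Req_dec (G (i0 + k)) (G i0)) as [e|ne]; [exact e|].
    exfalso. assert (gf F (phi th n (i0 + k) - phi th n i0 + (G (i0 + k) - G i0)) <
       gf F (phi th n (i0 + k) - phi th n i0)) by (apply gf_strict; auto; lra). lra. }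
  assert (Hall : forall j, (j < n)%nat -> G j = G i0).
  { intros j Hj. destruct (Nat.le_gt_cases i0 j).
    - replace j with (i0 + (j - i0))%nat by lia. apply Hk. lia.
    - rewrite <- G_per. replace (j + n)%nat with (i0 + (j + n - i0))%nat by lia. apply Hk. lia. }
  intros j Hj. rewrite (Hall j Hj), (Hall 0%nat) by lia. reflexivity.
Qed.

End Main.

Theorem mainTheorem3 (n : nat) (F : R -> R) (th : nat -> R)
  (Hn : (2 <= n)%nat)
  (Fpos : forall x, 0 < x < PI -> 0 < F x)
  (Fdec : forall x y, 0 < x < PI -> 0 < y < PI -> x < y -> F y < F x)
  (Hord : forall i, (S i < n)%nat -> th i < th (S i))
  (Hwrap : th (pred n) < th 0%nat + 2 * PI)
  (Heq : forall i, (i < n)%nat -> in_equilibrium F n th i) :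
  forall i, (i < n)%nat ->
    arcdist (th i) (th (Nat.modulo (S i) n)) = arcdist (th 0%nat) (th 1%nat).
Proof.
  intros i Hi. unfold arcdist.
  pose proof (all_eq n F th Hn Fpos Fdec Hord Hwrap Heq i Hi) as HG.
  unfold G in HG. rewrite (phi_small n th Hn i), (phi_small n th Hn 1%nat), (phi_small n th Hn 0%nat) in HG by lia.
  unfold phi in HG.
  set (m := INR (S i / n)) in HG.
  replace (th ((S i) mod n)%nat - th i) with ((th 1%nat - th 0%nat) - 2 * m * PI) by lra.
  unfold m. rewrite <- (cos_period _ (S i / n)). f_equal. f_equal. ring.
Qed.
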